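(* Let $\{V_0(n)\}_{n\in\mathbb{Z}}$ be a real-valued sequence and let $\psi_1,\dots,\psi_k$ be sequences satisfying $$\big(-\bigtriangleup^2+V_0(n)\big)\psi_i(n)=\epsilon_i\,\psi_i(n+2),\qquad i=1,\dots,k,$$ for pairwise different real constants $\epsilon_1,\dots,\epsilon_k$, and assume the Casoratians $C(\psi_1,\dots,\psi_j)(n)$ are nonzero for all $n$ and $j=1,\dots,k$. Define recursively, for $i=1,\dots,k$, $$\hat\psi_i(n)=\big(-\bigtriangleup+f_{i-1}(n)\big)\cdots\big(-\bigtriangleup+f_1(n)\big)\psi_i(n),\qquad f_i(n)=\frac{\bigtriangleup\hat\psi_i(n)}{\hat\psi_i(n)},$$ $$V_i(n)=V_{i-1}(n+1)-2\bigtriangleup f_i(n+1)$$ (with $\hat\psi_1=\psi_1$; the $f_j(n)$ act as multiplication operators). Then for $i=1,\dots,k$: $$\hat\psi_i(n)=(-1)^{i-1}\frac{C(\psi_1,\dots,\psi_i)(n)}{C(\psi_1,\dots,\psi_{i-1})(n)},\qquad \big(-\bigtriangleup^2+V_{i-1}(n)\big)\hat\psi_i(n)=\epsilon_i\,\hat\psi_i(n+2),$$ $$f_j(n)=\frac{C(\psi_1,\dots,\psi_{j-1})(n)}{C(\psi_1,\dots,\psi_{j-1})(n+1)}\cdot\frac{C(\psi_1,\dots,\psi_j)(n+1)}{C(\psi_1,\dots,\psi_j)(n)}-1,$$ and $$V_i(n)=V_0(n+i)-2\bigtriangleup\big(f_1(n+i)+f_2(n+i-1)+\dots+f_i(n+1)\big)=V_0(n+i)-2\bigtriangleup\frac{D_i(n)}{C(\psi_1,\dots,\psi_i)(n+1)},$$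 where $D_i(n)$ is the $i\times i$ determinant whose columns are indexed by $\psi_1,\dots,\psi_i$ and whose rows are the values at $n+1,n+2,\dots,n+i-1,n+i+1$, i.e. $D_i(n)=\det\big(\psi_c(n+r_\ell)\big)_{\ell,c=1}^{i}$ with $(r_1,\dots,r_i)=(1,2,\dots,i-1,i+1)$.
   Context: For a sequence $\psi:\mathbb{Z}\to\mathbb{C}$, $\bigtriangleup\psi(n)=\psi(n+1)-\psi(n)$ and $\bigtriangleup^2\psi(n)=\psi(n+2)-2\psi(n+1)+\psi(n)$. The Casoratian of sequences $\psi_1,\dots,\psi_m$ is $C(\psi_1,\dots,\psi_m)(n)=\det\big(\psi_c(n+r-1)\big)_{r,c=1}^{m}$ (rows $n,n+1,\dots,n+m-1$), with the empty Casoratian $C()(n)=1$. *)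

(* Defs.v *)
From HB Require Import structures.
From mathcomp Require Import all_boot all_order all_algebra.
From mathcomp Require Import complex.
From mathcomp Require Import reals.
Set Implicit Arguments. Unset Strict Implicit. Unset Printing Implicit Defensive.
Import Order.TTheory GRing.Theory Num.Theory.
Local Open Scope ring_scope.

Section Defs.
Variable R : realType.
Local Notation C := (R[i]).

Definition delta (g : int -> C) (n : int) : C := g (n + 1) - g n.
Definition delta2 (g : int -> C) (n : int) : C := g (n + 2) - 2 * g (n + 1) + g n.

(* Sequences are indexed 1..k: psi 1, ..., psi k  (psi 0 is unused). *)
(* Casoratian C(psi_1,...,psi_m)(n) = det (psi_{c}(n + r - 1))_{r,c=1..m};
   for m = 0 this is the determinant of the empty matrix, i.e. 1. *)
Definition casoratian (psi : nat -> int -> C) (m : nat) (n : int) : C :=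
  \det (\matrix_(r < m, c < m) psi c.+1 (n + (r : nat)%:Z)).

(* D_i(n): rows at n+1, ..., n+i-1, n+i+1 *)
Definition Dmat (psi : nat -> int -> C) (i : nat) (n : int) : C :=
  \det (\matrix_(l < i, c < i)
          psi c.+1 (n + (if ((l : nat).+1 < i)%N then (l : nat).+1 else i.+1)%:Z)).

Definition dop (f g : int -> C) : int -> C := fun n => - delta g n + f n * g n.

(* apply (-Delta + f_j) ... (-Delta + f_1) to g, given fs = [:: f_1; ...; f_j] *)
Definition apply_ops (fs : seq (int -> C)) (g : int -> C) : int -> C :=
  foldl (fun h f => dop f h) g fs.

Fixpoint fseq (psi : nat -> int -> C) (j : nat) : seq (int -> C) :=
  match j with
  | 0 => [::]
  | j'.+1 =>
      let prev := fseq psi j' in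
      let h := apply_ops prev (psi j'.+1) in
      rcons prev (fun n => delta h n / h n)
  end.

Definition hatpsi (psi : nat -> int -> C) (i : nat) : int -> C :=
  apply_ops (fseq psi i.-1) (psi i).

(* f_j = Delta hat psi_j / hat psi_j   (j >= 1) *)
Definition fcoef (psi : nat -> int -> C) (j : nat) : int -> C :=
  nth (fun _ => 0) (fseq psi j) j.-1.

Fixpoint Vpot (psi : nat -> int -> C) (V0 : int -> C) (i : nat) : int -> C :=
  match i with
  | 0 => V0
  | i'.+1 => fun n => Vpot psi V0 i' (n + 1) - 2 * delta (fcoef psi i) (n + 1)
  end.

End Defs.

(* Main.v *)
Require Import Defs.
From HB Require Import structures.
From mathcomp Require Import all_boot all_order all_algebra.
From mathcomp Require Import complex.
From mathcomp Require Import reals.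
From mathcomp Require Import ring zify.
Set Implicit Arguments. Unset Strict Implicit. Unset Printing Implicit Defensive.
Import Order.TTheory GRing.Theory Num.Theory.
Local Open Scope ring_scope.

Section CoreCom.
Variable R : comNzRingType.

Lemma jacobi_core p (M : 'M[R]_(2 + p)) :
  \det M * \det (ulsubmx (\adj M)) = \det M ^+ 2 * \det (drsubmx M).
Proof.
pose X : 'M[R]_(2 + p) := row_mx (lsubmx (\adj M)) (col_mx 0 1%:M).
have dX : \det X = \det (ulsubmx (\adj M)).
  rewrite /X -[lsubmx _](vsubmxK) -block_mxEh det_lblock det1 mulr1.
  by congr (\det _); apply/matrixP => i j; rewrite !mxE.
have MX : M *m X = block_mx (\det M)%:M (ursubmx M) 0 (drsubmx M).
  rewrite /X mul_mx_row mulmx_lsub mul_mx_adj.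
  have -> : M *m col_mx 0 1%:M = rsubmx M.
    by rewrite -{1}(hsubmxK M) mul_row_col mulmx0 add0r mulmx1.
  rewrite (scalar_mx_block 2 p) block_mxEh row_mxKl.
  rewrite block_mxEh -[rsubmx M]vsubmxK.
  by congr row_mx; congr col_mx; apply/matrixP => i j; rewrite !mxE.
by rewrite -dX -det_mulmx MX det_ublock det_scalar.
Qed.
End CoreCom.

Section CoreField.
Variable K : fieldType.

Lemma jacobi_field p (M : 'M[K]_(2 + p)) :
  \det (ulsubmx (\adj M)) = \det M * \det (drsubmx M).
Proof.
pose N := char_poly_mx (- M).
have dN : \det N != 0 by apply: monic_neq0; apply: char_poly_monic.
have HN := jacobi_core N.
have HN' : \det (ulsubmx (\adj N)) = \det N * \det (drsubmx N).
  by apply: (mulfI dN); rewrite HN expr2 mulrA.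
have NM : map_mx (horner_eval 0) N = M.
  apply/matrixP => i j; rewrite !mxE /horner_eval.
  by rewrite !hornerE /= ?mxE; case: (i == j); rewrite /= ?hornerE ?opprK.
have := congr1 (horner_eval 0) HN'.
rewrite rmorphM /= -!det_map_mx /= map_ulsubmx map_mx_adj map_drsubmx NM.
by [].
Qed.
End CoreField.

Definition mk (K : Type) m (H : nat -> nat -> K) : 'M[K]_m := \matrix_(r < m, c < m) H r c.

Lemma det2 (K : comNzRingType) (A : 'M[K]_2) :
  \det A = A ord0 ord0 * A ord_max ord_max - A ord0 ord_max * A ord_max ord0.
Proof.
rewrite (expand_det_row _ ord0) !big_ord_recl big_ord0 /cofactor !det_mx11 !mxE /=.
have e1 : lift ord0 (0 : 'I_1) = ord_max :> 'I_2 by apply/val_inj.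
have e2 : lift (lift ord0 ord0) (0 : 'I_1) = ord0 :> 'I_2 by apply/val_inj.
have e3 : lift ord0 ord0 = ord_max :> 'I_2 by apply/val_inj.
rewrite e2 e1 ?e3 /bump /= expr0 expr1; ring.
Qed.

Lemma mk_minor (K : Type) m (H : nat -> nat -> K) (i j : 'I_m.+1) :
  row' i (col' j (mk m.+1 H)) = mk m (fun r c => H (bump i r) (bump j c)).
Proof. by apply/matrixP => r c; rewrite !mxE. Qed.

Lemma mk_dr (K : Type) p (H : nat -> nat -> K) :
  drsubmx (mk (2 + p) H) = mk p (fun r c => H r.+2 c.+2).
Proof. by apply/matrixP => r c; rewrite !mxE. Qed.

Lemma DJF (K : fieldType) p (F : nat -> nat -> K) :
  \det (mk p.+2 F) * \det (mk p (fun r c => F r.+2 c.+2)) =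
  \det (mk p.+1 (fun r c => F r.+1 c.+1)) * \det (mk p.+1 (fun r c => F (bump 1 r) (bump 1 c)))
  - \det (mk p.+1 (fun r c => F (bump 1 r) c.+1)) * \det (mk p.+1 (fun r c => F r.+1 (bump 1 c))).
Proof.
have J := jacobi_field (mk (2 + p) F).
rewrite det2 !mxE /cofactor !mk_minor mk_dr /= in J.
rewrite -J.
have aux : forall (a b c d a' c' d' : K), a = a' -> c = c' -> d = d' ->
  (-1) ^+ (0 + 0) * a * ((-1) ^+ (1 + 1) * b) - (-1) ^+ (1 + 0) * c * ((-1) ^+ (0 + 1) * d)
  = a' * b - c' * d'.
  by move=> a b c d a' c' d' -> -> ->; rewrite /= expr0 expr1 expr2; ring.
by apply: aux.
Qed.

Lemma eq_mk (K : Type) m (H H' : nat -> nat -> K) :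
  (forall r c, (r < m)%N -> (c < m)%N -> H r c = H' r c) -> mk m H = mk m H'.
Proof. by move=> e; apply/matrixP => r c; rewrite !mxE e. Qed.

Lemma det_mk_tr (K : comNzRingType) m (H : nat -> nat -> K) :
  \det (mk m (fun r c => H c r)) = \det (mk m H).
Proof. by rewrite -det_tr; congr (\det _); apply/matrixP => r c; rewrite !mxE. Qed.

Lemma bump_lt m r : (r < m)%N -> bump m r = r.
Proof. by move=> h; rewrite /bump leqNgt h. Qed.

Lemma rowmove (K : comNzRingType) m (G : nat -> nat -> K) :
  \det (mk m.+1 (fun r c => G (if r == 0%N then m else r.-1) c)) = (-1) ^+ m * \det (mk m.+1 G).
Proof.
rewrite (expand_det_row _ ord0) (expand_det_row _ ord_max) mulr_sumr.
apply: eq_bigr => j _; rewrite /cofactor !mk_minor !mxE /=.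
rewrite (@eq_mk _ m (fun r c => G (bump m r) (bump j c)) (fun r c => G r (bump j c))); last first.
  by move=> r c hr _; rewrite bump_lt.
have s : (-1) ^+ m * (-1) ^+ m = 1 :> K.
  by rewrite -exprD -signr_odd oddD addbb.
rewrite add0n exprD.
transitivity (((-1) ^+ m * (-1) ^+ m) * (G m j * ((-1) ^+ j * \det (mk m (fun r c => G r (bump j c)))))).
  by rewrite s mul1r.
ring.
Qed.

Lemma colmove (K : comNzRingType) m (G : nat -> nat -> K) :
  \det (mk m.+1 (fun r c => G r (if c == 0%N then m else c.-1))) = (-1) ^+ m * \det (mk m.+1 G).
Proof.
rewrite -det_mk_tr (@rowmove _ m (fun r c => G c r)) det_mk_tr //.
Qed.

Lemma unitcol (K : comNzRingType) m q (H : nat -> nat -> K) :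
  (q <= m)%N -> (forall r, (r <= m)%N -> H r m = (r == q)%:R) ->
  \det (mk m.+1 H) = (-1) ^+ (q + m) * \det (mk m (fun r c => H (bump q r) c)).
Proof.
move=> hq hH.
rewrite (expand_det_col _ ord_max) (bigD1 (inord q)) //=.
rewrite big1 ?addr0; last first.
  move=> i hi; rewrite mxE hH; last by rewrite -ltnS.
  case: eqP => [e|_]; last by rewrite mul0r.
  by move: hi; rewrite (_ : i = inord q) ?eqxx //; apply/val_inj; rewrite /= inordK.
rewrite mxE hH; last by rewrite inordK.
rewrite inordK // eqxx mul1r /cofactor mk_minor inordK //=.
rewrite (@eq_mk _ m (fun r c => H (bump q r) (bump m c)) (fun r c => H (bump q r) c)) // => r c _ hc; by rewrite (bump_lt hc).
Qed.

Lemma DJ2 (K : fieldType) p (G : nat -> nat -> K) :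
  \det (mk p.+2 G) * \det (mk p (fun r c => G r.+1 c)) =
  \det (mk p.+1 G) * \det (mk p.+1 (fun r c => G r.+1 (bump p c)))
  - \det (mk p.+1 (fun r c => G r (bump p c))) * \det (mk p.+1 (fun r c => G r.+1 c)).
Proof.
pose kap c := if c == 0%N then p else if c == 1%N then p.+1 else c.-2.
pose F r c := G (if r == 0%N then p.+1 else r.-1) (kap c).
have D := DJF p F.
have bpp : bump p p = p.+1 by rewrite /bump leqnn.
have T1 : \det (mk p.+2 F) = (-1) ^+ p.+1 * \det (mk p.+2 G).
  rewrite (@rowmove _ p.+1 (fun r c => G r (kap c))).
  pose G1 r c := G r (if c == 0%N then p.+1 else c.-1).
  rewrite (@eq_mk _ _ (fun r c => G r (kap c)) (fun r c => G1 r (if c == 0%N then p.+1 else c.-1))); last first.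
    by move=> r [|[|c]] _ _ //=.
  rewrite colmove /G1 colmove mulrA -exprD -signr_odd oddD addbb mul1r //.
have T00 : \det (mk p.+1 (fun r c => F r.+1 c.+1)) = (-1) ^+ p * \det (mk p.+1 (fun r c => G r (bump p c))).
  rewrite -colmove; congr (\det _); apply: eq_mk => r [|c] _ hc //=.
    by rewrite /bump leqnn.
  by rewrite /F /kap /= bump_lt.
have T11 : \det (mk p.+1 (fun r c => F (bump 1 r) (bump 1 c))) = \det (mk p.+1 (fun r c => G r.+1 c)).
  rewrite -[RHS]mul1r -(_ : (-1) ^+ p * (-1) ^+ p = 1 :> K); last first.
    by rewrite -exprD -signr_odd oddD addbb.
  rewrite -mulrA -colmove -rowmove; congr (\det _); apply: eq_mk => -[|r] [|c] _ _ //=.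
have T10 : \det (mk p.+1 (fun r c => F (bump 1 r) c.+1)) = \det (mk p.+1 (fun r c => G r.+1 (bump p c))).
  rewrite -[RHS]mul1r -(_ : (-1) ^+ p * (-1) ^+ p = 1 :> K); last first.
    by rewrite -exprD -signr_odd oddD addbb.
  rewrite -mulrA -colmove -rowmove; congr (\det _); apply: eq_mk => -[|r] [|c] _ hc //=.
  all: rewrite ?bpp /F /kap /=; rewrite ?bump_lt //.
have T01 : \det (mk p.+1 (fun r c => F r.+1 (bump 1 c))) = (-1) ^+ p * \det (mk p.+1 G).
  rewrite -(@colmove _ p G); congr (\det _); apply: eq_mk => r [|c] _ hc //=.
have Tc : \det (mk p (fun r c => F r.+2 c.+2)) = \det (mk p (fun r c => G r.+1 c)) by [].
rewrite T1 T00 T11 T10 T01 Tc exprS in D.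
have ss : (-1) ^+ p * (-1) ^+ p = 1 :> K by rewrite -exprD -signr_odd oddD addbb.
set s := (-1) ^+ p in D ss.
transitivity ((s * s) * (\det (mk p.+2 G) * \det (mk p (fun r c => G r.+1 c)))).
  by rewrite ss mul1r.
transitivity (- s * ((-1 * s) * \det (mk p.+2 G) * \det (mk p (fun r c => G r.+1 c)))).
  ring.
rewrite D; transitivity ((s * s) * (\det (mk p.+1 G) * \det (mk p.+1 (fun r c => G r.+1 (bump p c)))
  - \det (mk p.+1 (fun r c => G r (bump p c))) * \det (mk p.+1 (fun r c => G r.+1 c)))).
  ring.
by rewrite ss mul1r.
Qed.

Section Seq.
Variable R : realType.
Local Notation C := (R[i]).

Lemma add11 (n : int) : n + 1 + 1 = n + 2.
Proof. by rewrite -addrA. Qed.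
Lemma add21 (n : int) : n + 2 + 1 = n + 1 + 2.
Proof. by rewrite -!addrA. Qed.
Lemma add12 (n : int) : n + 1 + 1 + 1 = n + 1 + 2.
Proof. by rewrite -!addrA. Qed.

Lemma darboux_alg (h0 h1 h2 h3 g0 g1 g2 g3 V0 V1 eh eg : C) :
  h0 != 0 -> h1 != 0 -> h2 != 0 ->
  - (h2 - 2 * h1 + h0) + V0 * h0 = eh * h2 ->
  - (h3 - 2 * h2 + h1) + V1 * h1 = eh * h3 ->
  - (g2 - 2 * g1 + g0) + V0 * g0 = eg * g2 ->
  - (g3 - 2 * g2 + g1) + V1 * g1 = eg * g3 ->
  - (- (g3 - g2) + (h3 - h2) / h2 * g2
     - 2 * (- (g2 - g1) + (h2 - h1) / h1 * g1)
     + (- (g1 - g0) + (h1 - h0) / h0 * g0))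
  + (V1 - 2 * ((h3 - h2) / h2 - (h2 - h1) / h1)) * (- (g1 - g0) + (h1 - h0) / h0 * g0)
  = eg * (- (g3 - g2) + (h3 - h2) / h2 * g2).
Proof.
move=> n0 n1 n2 E1 E2 E3 E4.
apply/eqP; rewrite -subr_eq0; apply/eqP.
set L := (X in X - _ = 0).
set Rr := (X in _ - X = 0).
have -> : L - Rr =
   - ((- (g3 - 2 * g2 + g1) + V1 * g1) - eg * g3)
   + h3 / h2 * ((- (g2 - 2 * g1 + g0) + V0 * g0) - eg * g2)
   + g0 / h0 * (((- (h3 - 2 * h2 + h1) + V1 * h1) - eh * h3)
                - h3 / h2 * ((- (h2 - 2 * h1 + h0) + V0 * h0) - eh * h2)).
  rewrite /L /Rr; field.
  by rewrite n0 n1 n2.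
rewrite E1 E2 E3 E4 !subrr; ring.
Qed.

Lemma darboux_step (V : int -> C) (eh eg : C) (h g : int -> C) :
  (forall n, h n != 0) ->
  (forall n, - delta2 h n + V n * h n = eh * h (n + 2)) ->
  (forall n, - delta2 g n + V n * g n = eg * g (n + 2)) ->
  let f := fun n => delta h n / h n in
  forall n, - delta2 (dop f g) n + (V (n + 1) - 2 * delta f (n + 1)) * dop f g n
            = eg * dop f g (n + 2).
Proof.
move=> hnz Eh Eg f n.
have Eh0 := Eh n; have Eh1 := Eh (n + 1); have Eg0 := Eg n; have Eg1 := Eg (n + 1).
move: Eh0 Eh1 Eg0 Eg1; rewrite /f /dop /delta2 /delta !add11 ?add21 ?add12.
by apply: darboux_alg.
Qed.

Definition gcas (s : nat -> int -> C) m n := \det (mk m (fun r c => s c (n + (r : nat)%:Z))).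

Lemma gcas_ext s s' m n : (forall c, (c < m)%N -> s c = s' c) -> gcas s m n = gcas s' m n.
Proof. by move=> e; rewrite /gcas; congr (\det _); apply: eq_mk => r c _ hc; rewrite e. Qed.

Lemma shift1 (n : int) (r : nat) : n + (r.+1)%:Z = n + 1 + r%:Z.
Proof. lia. Qed.

Lemma casDJ s p n :
  gcas s p.+2 n * gcas s p (n + 1) =
  gcas s p.+1 n * gcas (fun c => s (bump p c)) p.+1 (n + 1)
  - gcas (fun c => s (bump p c)) p.+1 n * gcas s p.+1 (n + 1).
Proof.
have := DJ2 p (fun r c => s c (n + (r : nat)%:Z)).
have e : forall m (t : nat -> int -> C), mk m (fun r c => t c (n + (r.+1 : nat)%:Z)) = mk m (fun r c => t c (n + 1 + (r : nat)%:Z)).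
  by move=> m t; apply: eq_mk => r c _ _; rewrite shift1.
by rewrite !e (e _ (fun c => s (bump p c))).
Qed.

Lemma sgn_odd n : (-1) ^+ (n + n.+1) = -1 :> C.
Proof. by rewrite -signr_odd oddD /= addbN addbb. Qed.
Lemma sgn_even n : (-1) ^+ (n + n) = 1 :> C.
Proof. by rewrite -signr_odd oddD addbb. Qed.

Variable psi : nat -> int -> C.

Lemma cas_gcas m n : casoratian psi m n = gcas (fun c => psi c.+1) m n.
Proof. by []. Qed.

Lemma Dmat_mk i n : Dmat psi i n =
  \det (mk i (fun l c => psi c.+1 (n + (if (l.+1 < i)%N then l.+1 else i.+1)%:Z))).
Proof. by []. Qed.

Lemma plucker q m :
  Dmat psi q.+2 m * casoratian psi q.+1 (m + 2) =
  Dmat psi q.+1 (m + 1) * casoratian psi q.+2 (m + 1)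
  + casoratian psi q.+1 (m + 1) * casoratian psi q.+2 (m + 2).
Proof.
pose G r c := if (c < q.+2)%N then psi c.+1 (m + 1 + (r : nat)%:Z) else (r == q.+1)%:R.
have D := DJ2 q.+1 G.
have X1 : \det (mk q.+3 G) = - Dmat psi q.+2 m.
  rewrite (@unitcol _ q.+2 q.+1) //; last by move=> r _; rewrite /G ltnn.
  rewrite sgn_odd mulN1r Dmat_mk; congr (- \det _); apply: eq_mk => r c hr hc.
  rewrite /G hc; congr (psi _ _); rewrite /bump; case: (leqP q.+1 r) => h; case: (ltnP r.+1 q.+2) => h'; lia.
have X2 : \det (mk q.+1 (fun r c => G r.+1 c)) = casoratian psi q.+1 (m + 2).
  rewrite cas_gcas /gcas; congr (\det _); apply: eq_mk => r c hr hc.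
  rewrite /G ltnS (ltnW hc); congr (psi _ _); lia.
have X3 : \det (mk q.+2 G) = casoratian psi q.+2 (m + 1).
  by rewrite cas_gcas /gcas; congr (\det _); apply: eq_mk => r c hr hc; rewrite /G hc.
have X4 : \det (mk q.+2 (fun r c => G r.+1 (bump q.+1 c))) = - Dmat psi q.+1 (m + 1).
  rewrite (@unitcol _ q.+1 q) //; last first.
    by move=> r _; rewrite /G /bump leqnn /= ltnn eqSS.
  rewrite sgn_odd mulN1r Dmat_mk; congr (- \det _); apply: eq_mk => r c hr hc.
  rewrite /G bump_lt // ltnS (ltnW hc); congr (psi _ _); rewrite /bump; case: (leqP q r) => h; case: (ltnP r.+1 q.+1) => h'; lia.
have X5 : \det (mk q.+2 (fun r c => G r (bump q.+1 c))) = casoratian psi q.+1 (m + 1).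
  rewrite (@unitcol _ q.+1 q.+1) //; last first.
    by move=> r _; rewrite /G /bump leqnn /= ltnn.
  rewrite sgn_even mul1r cas_gcas /gcas; congr (\det _); apply: eq_mk => r c hr hc.
  rewrite !bump_lt // /G ltnS (ltnW hc) //.
have X6 : \det (mk q.+2 (fun r c => G r.+1 c)) = casoratian psi q.+2 (m + 2).
  rewrite cas_gcas /gcas; congr (\det _); apply: eq_mk => r c hr hc.
  rewrite /G hc; congr (psi _ _); lia.
rewrite X1 X2 X3 X4 X5 X6 in D.
by apply/eqP; rewrite -(inj_eq (@oppr_inj _)) -mulNr D; apply/eqP; ring.
Qed.


Lemma fseq_size j : size (fseq psi j) = j.
Proof. by elim: j => //= j IH; rewrite size_rcons IH. Qed.

Definition hh j := apply_ops (fseq psi j) (psi j.+1).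

Lemma fcoefS j : fcoef psi j.+1 = (fun n => delta (hh j) n / hh j n).
Proof. by rewrite /fcoef /= nth_rcons fseq_size ltnn eqxx. Qed.

Lemma apply_opsS j g :
  apply_ops (fseq psi j.+1) g = dop (fcoef psi j.+1) (apply_ops (fseq psi j) g).
Proof. by rewrite fcoefS /= /apply_ops foldl_rcons. Qed.

Lemma cas0 n : casoratian psi 0 n = 1.
Proof. exact: det_mx00. Qed.

Definition ext j i := fun c => if (c < j)%N then psi c.+1 else psi i.

Lemma ext_cas j n : gcas (ext j j.+1) j.+1 n = casoratian psi j.+1 n.
Proof. rewrite cas_gcas; apply: gcas_ext => c hc; rewrite /ext; case: ltnP => // h; congr psi; lia. Qed.

Variable k : nat.
Hypothesis hcas : forall j, (1 <= j <= k)%N -> forall n : int, casoratian psi j n != 0.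

Lemma cas_nz j n : (j <= k)%N -> casoratian psi j n != 0.
Proof. by case: j => [|j] h; [rewrite cas0 oner_neq0 | apply: hcas]. Qed.

Lemma hat_formula j : forall i, (j < i)%N -> (i <= k)%N -> forall n,
  apply_ops (fseq psi j) (psi i) n = (-1) ^+ j * (gcas (ext j i) j.+1 n / casoratian psi j n).
Proof.
elim: j => [|j IH] i hji hik n.
  by rewrite /= cas0 divr1 expr0 mul1r /gcas det_mx11 mxE /= addr0.
have hjk : (j.+1 <= k)%N by lia.
rewrite apply_opsS fcoefS /dop /delta -/(hh j).
have Hh m : hh j m = (-1) ^+ j * (casoratian psi j.+1 m / casoratian psi j m).
  by rewrite /hh IH // ext_cas.
have Hg m := IH i (ltnW hji) hik m.
rewrite !Hh !Hg.
have DJ := casDJ (ext j.+1 i) j n.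
have e1 m : gcas (ext j.+1 i) j m = casoratian psi j m.
  by rewrite cas_gcas; apply: gcas_ext => c hc; rewrite /ext ltnS ltnW.
have e2 m : gcas (ext j.+1 i) j.+1 m = casoratian psi j.+1 m.
  by rewrite cas_gcas; apply: gcas_ext => c hc; rewrite /ext hc.
have e3 m : gcas (fun c => ext j.+1 i (bump j c)) j.+1 m = gcas (ext j i) j.+1 m.
  apply: gcas_ext => c hc; rewrite /ext /bump; case: (leqP j c) => h.
    by rewrite ltnS leqNgt (_ : c = j) ?ltnSn //; apply/eqP; rewrite eqn_leq h -ltnS hc.
  by rewrite ?add0n ?ltnS ?(ltnW h) ?h.
rewrite e1 !e2 !e3 in DJ.
have n0 := cas_nz n (ltnW hjk); have n1 := cas_nz (n + 1) (ltnW hjk).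
have a0 := cas_nz n hjk.
have sg : (-1) ^+ j != 0 :> C by rewrite signr_eq0.
set T := gcas (ext j.+1 i) j.+2 n in DJ *.
have eT : T = (casoratian psi j.+1 n * gcas (ext j i) j.+1 (n + 1)
   - gcas (ext j i) j.+1 n * casoratian psi j.+1 (n + 1)) / casoratian psi j (n + 1).
  by rewrite -DJ; field.
rewrite eT exprS; field.
by rewrite a0 n0 n1 sg.
Qed.


Lemma hh_formula j m : (j < k)%N ->
  hh j m = (-1) ^+ j * (casoratian psi j.+1 m / casoratian psi j m).
Proof. by move=> h; rewrite /hh hat_formula // ext_cas. Qed.

Lemma hh_nz j m : (j < k)%N -> hh j m != 0.
Proof.
move=> h; rewrite hh_formula // mulf_neq0 ?signr_eq0 // mulf_neq0 ?invr_eq0 ?cas_nz //.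
exact: ltnW.
Qed.

Lemma fcoef_formula j n : (1 <= j <= k)%N ->
  fcoef psi j n = casoratian psi j.-1 n / casoratian psi j.-1 (n + 1)
            * (casoratian psi j (n + 1) / casoratian psi j n) - 1.
Proof.
case: j => [//|j] /= hj.
have hjk : (j < k)%N by lia.
rewrite fcoefS /delta !hh_formula //.
have n0 := cas_nz n (ltnW hjk); have n1 := cas_nz (n + 1) (ltnW hjk).
have a0 := cas_nz n hjk; have a1 := cas_nz (n + 1) hjk.
have sg : (-1) ^+ j != 0 :> C by rewrite signr_eq0.
field.
by rewrite a0 n0 n1 sg.
Qed.

Lemma sumS i m :
  \sum_(1 <= j < i.+2) fcoef psi j (m + (i.+2 - j)%N%:Z) =
  \sum_(1 <= j < i.+1) fcoef psi j (m + 1 + (i.+1 - j)%N%:Z) + fcoef psi i.+1 (m + 1).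
Proof.
rewrite big_nat_recr //= subSnn; congr (_ + _).
apply: eq_big_nat => j /andP [h1 h2]; congr (fcoef _ _ _); lia.
Qed.

Lemma Vpot_sum V0 i n : Vpot psi V0 i n =
  V0 (n + i%:Z) - 2 * delta (fun m => \sum_(1 <= j < i.+1) fcoef psi j (m + (i.+1 - j)%N%:Z)) n.
Proof.
elim: i n => [|i IH] n.
  by rewrite /= /delta !big_geq // subrr mulr0 subr0 addr0.
rewrite /= IH /delta !sumS.
have -> : n + 1 + i%:Z = n + (i.+1)%:Z by lia.
have -> : n + 1 + 1 = n + 2 by rewrite -addrA.
ring.
Qed.

Lemma cas1 n : casoratian psi 1 n = psi 1 n.
Proof. by rewrite cas_gcas /gcas det_mx11 mxE /= addr0. Qed.

Lemma Dmat1 n : Dmat psi 1 n = psi 1 (n + 2).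
Proof. by rewrite Dmat_mk det_mx11 mxE. Qed.

Lemma S_D i : (1 <= i <= k)%N -> forall m,
  \sum_(1 <= j < i.+1) fcoef psi j (m + (i.+1 - j)%N%:Z)
  = Dmat psi i m / casoratian psi i (m + 1) - i%:R.
Proof.
elim: i => [//|[|q] IH] hi m.
  rewrite big_nat1 fcoef_formula // !cas0 !cas1 Dmat1.
  have e : m + (2 - 1)%N%:Z = m + 1 by [].
  by rewrite e add11 divr1 mul1r.
rewrite sumS IH; last by lia.
rewrite fcoef_formula //=.
have P := plucker q m.
have hq : (q.+1 <= k)%N by lia.
have c2 := cas_nz (m + 2) hq; have c1 := cas_nz (m + 1) hq.
have d1 := cas_nz (m + 1) hi; have d2 := cas_nz (m + 2) hi.
rewrite add11.
have eD : Dmat psi q.+2 m = (Dmat psi q.+1 (m + 1) * casoratian psi q.+2 (m + 1)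
  + casoratian psi q.+1 (m + 1) * casoratian psi q.+2 (m + 2)) / casoratian psi q.+1 (m + 2).
  by rewrite -P; field.
rewrite eD -!natr1.
field.
by apply/andP; split; [exact: d1 | exact: c2].
Qed.


Lemma hat_eq (V0 : int -> C) (eps : nat -> C)
  (heq : forall i, (1 <= i <= k)%N -> forall n : int,
       - delta2 (psi i) n + V0 n * psi i n = eps i * psi i (n + 2)) j :
  forall i, (j < i)%N -> (i <= k)%N -> forall n,
  - delta2 (apply_ops (fseq psi j) (psi i)) n
  + Vpot psi V0 j n * apply_ops (fseq psi j) (psi i) n
  = eps i * apply_ops (fseq psi j) (psi i) (n + 2).
Proof.
elim: j => [|j IH] i hji hik n.
  by apply: heq; apply/andP; split; [exact: leq_ltn_trans hji | exact: hik].
have hjk : (j < k)%N by lia.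
rewrite apply_opsS /= fcoefS.
apply: (@darboux_step _ (eps j.+1) _ (hh j)).
- by move=> m; apply: hh_nz.
- by move=> m; apply: IH.
- by move=> m; apply: IH => //; lia.
Qed.

End Seq.

Unset Implicit Arguments.

Theorem theorem4 (R : realType) (k : nat) (V0 : int -> R[i])
    (psi : nat -> int -> R[i]) (eps : nat -> R[i])
    (hV0 : forall n, V0 n \is Num.real)
    (heps_real : forall i, (1 <= i <= k)%N -> eps i \is Num.real)
    (heps_inj : forall i j, (1 <= i <= k)%N -> (1 <= j <= k)%N ->
                  i <> j -> eps i <> eps j)
    (heq : forall i, (1 <= i <= k)%N -> forall n : int,
       - delta2 (psi i) n + V0 n * psi i n = eps i * psi i (n + 2))
    (hcas : forall j, (1 <= j <= k)%N -> forall n : int, casoratian psi j n != 0) :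
  forall i, (1 <= i <= k)%N -> forall n : int,
    [/\ hatpsi psi i n
          = (-1) ^+ i.-1 * (casoratian psi i n / casoratian psi i.-1 n),
        - delta2 (hatpsi psi i) n + Vpot psi V0 i.-1 n * hatpsi psi i n
          = eps i * hatpsi psi i (n + 2),
        fcoef psi i n
          = casoratian psi i.-1 n / casoratian psi i.-1 (n + 1)
            * (casoratian psi i (n + 1) / casoratian psi i n) - 1,
        Vpot psi V0 i n
          = V0 (n + i%:Z)
            - 2 * delta (fun m => \sum_(1 <= j < i.+1) fcoef psi j (m + (i.+1 - j)%N%:Z)) n
      & Vpot psi V0 i n
          = V0 (n + i%:Z)
            - 2 * delta (fun m => Dmat psi i m / casoratian psi i (m + 1)) n].
Proof.
move=> i hi n.
case: i hi => [//|i] hi.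
have hik : (i < k)%N by lia.
split.
- by rewrite /hatpsi /= (hat_formula hcas) // ext_cas.
- by rewrite /hatpsi /=; apply: (hat_eq hcas heq).
- exact: (fcoef_formula hcas).
- exact: Vpot_sum.
- rewrite Vpot_sum /delta !(S_D hcas hi) //.
  congr (_ - 2 * _); ring.
Qed.
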